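(* For the prism $Y_n=C_n\square P_2$ with $n\ge 3$: $IDI(Y_n)=2$ if $n\ge 6$, and $IDI(Y_3)=IDI(Y_4)=IDI(Y_5)=3$.
   Context: $C_n$ is the cycle on $n$ vertices, $P_2$ the path on two vertices, and $\square$ the Cartesian product. For a finite simple connected graph $G=(V,E)$ with diameter $d$, a rank assignment is a function $f:V\to\mathbb{R}$; under $f$, the string of a vertex $v$ is the $d$-vector whose $i$-th coordinate is the sum of $f(w)$ over all vertices $w$ with $d(v,w)=i$. The ID-index $IDI(G)$ is the minimum $k$ such that there exists $f:V\to\mathbb{R}$ with $|f(V)|=k$ under which all vertices have distinct strings. *)

(* Defs.v *)
From HB Require Import structures.
From mathcomp Require Import all_boot all_order all_algebra.
From mathcomp Require Import Rstruct.
From Stdlib Require Import Rdefinitions.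
Set Implicit Arguments. Unset Strict Implicit. Unset Printing Implicit Defensive.
Import Order.TTheory GRing.Theory Num.Theory.

Section Graph.
Variables (T : finType) (e : rel T).

Fixpoint ball (k : nat) (x : T) : {set T} :=
  if k is k'.+1 then
    ball k' x :|: [set y | [exists z in ball k' x, e z y]]
  else [set x].

(* graph distance: least k with y in ball k x (for a connected graph, < #|T|) *)
Definition dist (x y : T) : nat :=
  find (fun k => y \in ball k x) (iota 0 #|T|).

Definition diameter : nat := \max_(x : T) \max_(y : T) dist x y.

Local Open Scope ring_scope.
Definition vstring (f : T -> R) (v : T) : seq R :=
  [seq \sum_(w : T | dist v w == i) f w | i <- iota 1 diameter].

Local Close Scope ring_scope.

Definition nvals (f : T -> R) : nat := size (undup [seq f v | v <- enum T]).

Definition ID_assignment (f : T -> R) : Prop := injective (vstring f).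

Definition IDI_is (k : nat) : Prop :=
  (exists f : T -> R, ID_assignment f /\ nvals f = k) /\
  (forall f : T -> R, ID_assignment f -> k <= nvals f).

End Graph.

Definition prism_rel (n : nat) : rel ('I_n * bool) :=
  fun u v =>
    ((u.2 == v.2) && ((val v.1 == (val u.1).+1 %% n) || (val u.1 == (val v.1).+1 %% n)))
    || ((u.1 == v.1) && (u.2 != v.2)).
Arguments prism_rel n : clear implicits.

(* Main.v *)
Require Import Defs.
From mathcomp Require Import all_boot all_order all_algebra.
From mathcomp Require Import Rstruct.
From Stdlib Require Import Rdefinitions.
From mathcomp Require Import zify.
Set Implicit Arguments. Unset Strict Implicit. Unset Printing Implicit Defensive.

Module PartA.

Definition cd (n a b : nat) : nat :=
  minn (a - b + (b - a)) (n - (a - b + (b - a))).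
Definition Df (n : nat) (u v : 'I_n * bool) : nat := cd n u.1 v.1 + (u.2 != v.2).

Lemma succ_mod n a : a < n -> a.+1 %% n = if a.+1 == n then 0 else a.+1.
Proof.
move=> an; case: eqP => [->|h]; first by rewrite modnn.
by rewrite modn_small //; lia.
Qed.

Lemma prism_relE n (z y : 'I_n * bool) : prism_rel n z y =
  ((z.2 == y.2) && [|| nat_of_ord y.1 == (nat_of_ord z.1).+1, ((nat_of_ord z.1).+1 == n) && (nat_of_ord y.1 == 0),
     nat_of_ord z.1 == (nat_of_ord y.1).+1 | ((nat_of_ord y.1).+1 == n) && (nat_of_ord z.1 == 0)])
  || ((nat_of_ord z.1 == nat_of_ord y.1) && (z.2 != y.2)).
Proof.
rewrite /prism_rel succ_mod ?ltn_ord // succ_mod ?ltn_ord //.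
case: z y => [c p] [b t] /=; rewrite -val_eqE /=.
move: (val c) (val b) (ltn_ord c) (ltn_ord b) => c' b' hc hb.
case: ifP => H1; case: ifP => H2; case: p; case: t => /=; apply/idP/idP; lia.
Qed.

Lemma Df0 n (x y : 'I_n * bool) : (Df x y == 0) = (y == x).
Proof.
case: x => a s; case: y => b t.
rewrite /Df /cd /= xpair_eqE -val_eqE /=.
move: (val a) (val b) (ltn_ord a) (ltn_ord b) => a' b' ha hb.
case: s; case: t => /=; lia.
Qed.

Lemma Df_adj n (x z y : 'I_n * bool) : prism_rel n z y -> Df x y <= Df x z + 1.
Proof.
rewrite prism_relE.
case: x z y => [a s] [c p] [b t]; rewrite /Df /cd /=.
move: (val a) (val b) (val c) (ltn_ord a) (ltn_ord b) (ltn_ord c) => a' b' c' ha hb hc.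
case: s; case: t; case: p => /=; lia.
Qed.

Lemma Df_step n (x y : 'I_n * bool) : 0 < Df x y ->
  exists z, prism_rel n z y /\ Df x z + 1 = Df x y.
Proof.
case: x y => [a s] [b t] /=.
have bn := ltn_ord b; have an := ltn_ord a.
case: (eqVneq s t) => [<-|st].
- have hs : (if b.+1 == n then 0 else b.+1) < n by case: eqP; lia.
  have hp : (if nat_of_ord b == 0 then n - 1 else nat_of_ord b - 1) < n by case: eqP => _; lia.
  rewrite /Df /= eqxx addn0 => H.
  have [E|E] : cd n a (Ordinal hs) + 1 = cd n a b \/ cd n a (Ordinal hp) + 1 = cd n a b.
    rewrite /cd /= in H *; case: ifP => h1; case: ifP => h2; lia.
  + exists (Ordinal hs, s); split; last by rewrite /Df /= eqxx addn0.
    rewrite prism_relE /= eqxx /=; apply/orP; left; case: ifP => h1 /=; lia.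
  + exists (Ordinal hp, s); split; last by rewrite /Df /= eqxx addn0.
    rewrite prism_relE /= eqxx /=; apply/orP; left; case: ifP => h1 /=; lia.
- move=> _; exists (b, s); split.
    by rewrite prism_relE /= st eqxx /= orbT.
  by rewrite /Df /= eqxx st addn0.
Qed.

Lemma ballE n (x : 'I_n * bool) k : ball (prism_rel n) k x = [set y | Df x y <= k].
Proof.
elim: k => [|k IH] /=.
  by apply/setP => y; rewrite !inE leqn0 Df0.
apply/setP => y; rewrite !inE IH inE.
apply/idP/idP.
- case/orP => [H|/existsP [z /andP [Hz Hzy]]]; first by lia.
  rewrite inE in Hz; have := Df_adj x Hzy; lia.
- rewrite leq_eqVlt => /orP [/eqP E|H]; last by rewrite -ltnS H.
  have [z [Hz E2]] := Df_step (x := x) (y := y) (ltac:(lia)).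
  apply/orP; right; apply/existsP; exists z; rewrite inE Hz andbT; lia.
Qed.

Lemma find_iota_le d s m : s <= d < s + m -> find (fun k => d <= k) (iota s m) = d - s.
Proof.
elim: m s => [|m IH] s /=; first by lia.
move=> H; case: ifP => h; first by lia.
rewrite IH; lia.
Qed.

Lemma cd_le n a b : cd n a b <= n./2.
Proof. have := odd_double_half n; rewrite /cd -addnn; lia. Qed.

Lemma Df_le n (x y : 'I_n * bool) : Df x y <= n./2 + 1.
Proof. have := cd_le n x.1 y.1; rewrite /Df; case: (_ != _) => /=; lia. Qed.

Lemma distE n (x y : 'I_n * bool) : 0 < n -> dist (prism_rel n) x y = Df x y.
Proof.
move=> n0; rewrite /dist.
rewrite (eq_find (a2 := fun k => Df x y <= k)); last by move=> k; rewrite ballE inE.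
rewrite find_iota_le ?subn0 //.
rewrite card_prod card_ord card_bool /=.
have := Df_le x y; have := odd_double_half n; rewrite -addnn; lia.
Qed.

Lemma diamE n : 0 < n -> diameter (prism_rel n) = n./2 + 1.
Proof.
move=> n0; apply/eqP; rewrite eqn_leq; apply/andP; split.
  apply/bigmax_leqP => x _; apply/bigmax_leqP => y _; rewrite distE //; exact: Df_le.
have hn : n./2 < n by have := odd_double_half n; rewrite -addnn; lia.
pose x : 'I_n * bool := (Ordinal n0, false).
pose y : 'I_n * bool := (Ordinal hn, true).
apply: (leq_trans _ (leq_bigmax_cond x (erefl true))).
apply: (leq_trans _ (leq_bigmax_cond y (erefl true))).
rewrite distE // /Df /cd /=.
have := odd_double_half n; rewrite -addnn; lia.
Qed.

End PartA.
Import PartA.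

Module PartB.
Import Order.TTheory GRing.Theory Num.Theory.

Lemma sum_count (T : finType) (P : pred T) (l : seq T) :
  \sum_(w | P w) count_mem w l = count P l.
Proof.
elim: l => [|a l IH] /=; first by rewrite big1.
rewrite big_split /= IH; congr (_ + _).
case Pa: (P a).
- rewrite (bigD1 a) //= eqxx big1 ?addn0 // => w /andP[_ /negPf].
  by rewrite eq_sym => ->.
- rewrite big1 // => w Pw; case: eqP => // E; subst; by rewrite Pw in Pa.
Qed.

Definition PV n : finType := ('I_n * bool)%type.

Definition natR (x : nat) : R := GRing.natmul (GRing.one R) x.

Lemma natR_inj : injective natR.
Proof. by move=> a b /eqP; rewrite /natR eqr_nat => /eqP. Qed.

Definition fl n (l : seq ('I_n * bool)) : 'I_n * bool -> R :=
  fun w => natR (count_mem w l).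

Lemma vstringE n (l : seq ('I_n * bool)) u : 0 < n ->
  vstring (prism_rel n) (fl l) u =
  [seq natR (count (fun w => Df u w == i) l) | i <- iota 1 (n./2+1)].
Proof.
move=> n0; rewrite /vstring diamE //; apply: eq_map => i.
rewrite /fl /natR -natr_sum sum_count; congr (GRing.natmul _ _).
by apply: eq_count => w; rewrite distE.
Qed.

Lemma nvals_fl n (l : seq ('I_n * bool)) :
  nvals (fl l) = size (undup [seq count_mem v l | v <- enum (PV n)]).
Proof.
rewrite /nvals /fl.
have -> : [seq natR (count_mem v l) | v <- enum (PV n)] =
   [seq natR x | x <- [seq count_mem v l | v <- enum (PV n)]].
  by rewrite -map_comp.
by rewrite undup_map_inj ?size_map //; exact: natR_inj.
Qed.

Lemma fl_inj n (l : seq ('I_n * bool)) : 0 < n ->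
  injective (fun u : 'I_n * bool =>
     [seq count (fun w => Df u w == i) l | i <- iota 1 (n./2+1)]) ->
  ID_assignment (prism_rel n) (fl l).
Proof.
move=> n0 H u v; rewrite !vstringE // => E; apply: H.
apply: (inj_map natR_inj).
by rewrite -!map_comp.
Qed.

End PartB.
Import PartB.

Module PartC.
Import Order.TTheory GRing.Theory Num.Theory.
Local Open Scope ring_scope.

Lemma in_vals (T : finType) (f : T -> R) v : f v \in undup [seq f w | w <- enum T].
Proof. by rewrite mem_undup; apply: map_f; rewrite mem_enum. Qed.

Lemma nvals_le1 (T : finType) (f : T -> R) : (nvals f <= 1)%nat -> forall v w, f v = f w.
Proof.
move=> H v w; apply/eqP; apply: contraT => ne.
have : (size [:: f v; f w] <= nvals f)%nat.
  apply: uniq_leq_size; first by rewrite /= inE ne.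
  by move=> x; rewrite !inE => /orP [] /eqP ->; apply: in_vals.
by move=> /leq_trans /(_ H).
Qed.

Lemma nvals_le2 (T : finType) (f : T -> R) : (nvals f <= 2)%nat ->
  forall v0, exists b, forall w, f w = if w \in [set w | f w != f v0] then b else f v0.
Proof.
move=> H v0.
case: (pickP [pred w | f w != f v0]) => [w1 /= h1|h]; last first.
  exists 0%R => w; rewrite inE; have := h w; rewrite /= => /negbFE/eqP ->.
  by rewrite eqxx.
exists (f w1) => w; rewrite inE; case: eqP => [//|/eqP hw] /=.
apply/eqP; apply: contraT => ne.
have : (size [:: f v0; f w; f w1] <= nvals f)%nat.
  apply: uniq_leq_size; first by rewrite /= !inE negb_or eq_sym hw eq_sym h1 ne.
  by move=> x; rewrite !inE => /or3P [] /eqP ->; apply: in_vals.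
by move=> /leq_trans /(_ H).
Qed.

Lemma sum_const_pred (T : finType) (P : pred T) (x : R) :
  \sum_(w | P w) x = x *+ #|[set w | P w]|.
Proof. by rewrite -sumr_const; apply: eq_bigl => w; rewrite inE. Qed.

Lemma LB_gen n (f : PV n -> R) (S : {set PV n}) (a b : R) (u v : PV n) : (0 < n)%nat ->
  (forall w, f w = if w \in S then b else a) ->
  all (fun i => (#|[set w | (Df u w == i) && (w \in S)]| == #|[set w | (Df v w == i) && (w \in S)]|)
    && (#|[set w | (Df u w == i) && (w \notin S)]| == #|[set w | (Df v w == i) && (w \notin S)]|))
    (iota 1 (n./2+1)%nat) ->
  vstring (prism_rel n) f u = vstring (prism_rel n) f v.
Proof.
move=> n0 fE /allP H; rewrite /vstring diamE //; apply/eq_in_map => i /H /andP [/eqP E1 /eqP E2].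
have K : forall x : PV n, \sum_(w | dist (prism_rel n) x w == i) f w =
   b *+ #|[set w | (Df x w == i) && (w \in S)]| + a *+ #|[set w | (Df x w == i) && (w \notin S)]|.
  move=> x; rewrite (bigID (fun w => w \in S)) /=; congr (_ + _).
    rewrite (eq_bigr (fun _ => b)); last by move=> w /andP [_ Hw]; rewrite fE Hw.
    by rewrite sum_const_pred; congr (_ *+ _); apply: eq_card => w; rewrite !inE distE.
  rewrite (eq_bigr (fun _ => a)); last by move=> w /andP [_ /negPf Hw]; rewrite fE Hw.
  by rewrite sum_const_pred; congr (_ *+ _); apply: eq_card => w; rewrite !inE distE.
by rewrite !K E1 E2.
Qed.

Lemma flip_inj n : injective (fun w : PV n => (w.1, ~~ w.2)).
Proof. by move=> [a s] [b t] [-> /negb_inj ->]. Qed.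

Lemma LB2 n (f : PV n -> R) : (0 < n)%nat -> ID_assignment (prism_rel n) f -> (2 <= nvals f)%nat.
Proof.
move=> n0 Hid; rewrite ltnNge; apply/negP => /nvals_le1 Hc.
pose u : PV n := (Ordinal n0, false); pose v : PV n := (Ordinal n0, true).
suff : u = v by [].
apply: Hid; rewrite /vstring; apply: eq_map => i.
rewrite (reindex_inj (@flip_inj n)) /=.
apply: eq_big => [w|w _]; last exact: Hc.
by rewrite !distE // /Df /=; case: (w.2).
Qed.

Lemma LB3 n (f : PV n -> R) : (0 < n)%nat ->
  [forall S : {set PV n}, [exists u : PV n, [exists v : PV n, (u != v) &&
     all (fun i => (#|[set w | (Df u w == i) && (w \in S)]| == #|[set w | (Df v w == i) && (w \in S)]|)
    && (#|[set w | (Df u w == i) && (w \notin S)]| == #|[set w | (Df v w == i) && (w \notin S)]|))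
    (iota 1 (n./2+1)%nat)]]] ->
  ID_assignment (prism_rel n) f -> (3 <= nvals f)%nat.
Proof.
move=> n0 /forallP C Hid; rewrite ltnNge; apply/negP => /nvals_le2 /(_ (Ordinal n0, false)) [b fE].
have /existsP [u /existsP [v /andP [ne H]]] := C [set w | f w != f (Ordinal n0, false)].
by move: ne; rewrite (Hid _ _ (LB_gen n0 fE H)) eqxx.
Qed.

End PartC.
Import PartC.

Module PartE.

Lemma card_count (T : finType) (A : pred T) : #|A| = count A (enum T).
Proof. rewrite cardE /enum_mem size_filter; congr (count _ _); rewrite -[LHS]filter_predT; exact: eq_filter. Qed.

Definition pv n (w : PV n) : nat * bool := (nat_of_ord w.1, w.2).
Lemma pv_inj n : injective (@pv n).
Proof. by move=> [a s] [b t] [/val_inj -> ->]. Qed.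

Definition vl n : seq (nat * bool) := [seq (x, b) | x <- iota 0 n, b <- [:: false; true]].

Lemma mem_vl n p : (p \in vl n) = (p.1 < n).
Proof.
case: p => x b; apply/allpairsP/idP => [[[y c] /= [Hy _ [-> _]]]|H].
  by move: Hy; rewrite mem_iota.
by exists (x, b) => //=; rewrite mem_iota H; case: (b).
Qed.

Lemma vl_uniq n : uniq (vl n).
Proof. by apply: allpairs_uniq => //; [exact: iota_uniq | move=> [? ?] [? ?] _ _ []/= -> ->]. Qed.

Lemma perm_vl n : perm_eq (map (@pv n) (enum (PV n))) (vl n).
Proof.
apply: uniq_perm; first by rewrite (map_inj_uniq (@pv_inj n)) enum_uniq.
  exact: vl_uniq.
move=> [x b]; rewrite mem_vl /=; apply/mapP/idP.
  by case=> w _ [-> _]; apply: ltn_ord.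
by move=> H; exists (Ordinal H, b) => //; rewrite mem_enum.
Qed.

Lemma count_T n (P : pred (nat * bool)) : count (fun w => P (@pv n w)) (enum (PV n)) = count P (vl n).
Proof. have /permP H := perm_vl n; have := H P; rewrite /= => <-; by rewrite count_map. Qed.

Lemma card_T n (P : pred (nat * bool)) : #|[set w : PV n | P (pv w)]| = count P (vl n).
Proof. by rewrite cardsE card_count count_T. Qed.

Definition Dn n (p q : nat * bool) := cd n p.1 q.1 + (p.2 != q.2).
Lemma DfE n (u w : PV n) : Df u w = Dn n (pv u) (pv w).
Proof. by []. Qed.

Fixpoint masks (k : nat) : seq (seq bool) :=
  if k is k'.+1 then [seq b :: m | b <- [:: false; true], m <- masks k'] else [:: [::]].

Lemma masks_all k m : size m = k -> m \in masks k.
Proof.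
elim: k m => [|k IH] [|b m] // [E].
change (b :: m \in [seq b :: m | b <- [:: false; true], m <- masks k]).
by apply/allpairsP; exists (b, m); rewrite /= IH //; case: (b).
Qed.

Definition chkn n :=
  all (fun mask =>
    let z := zip (vl n) mask in
    has (fun u => has (fun v => (u != v) &&
      all (fun i => (count (fun q => (Dn n u q.1 == i) && q.2) z ==
                     count (fun q => (Dn n v q.1 == i) && q.2) z) &&
                    (count (fun q => (Dn n u q.1 == i) && ~~ q.2) z ==
                     count (fun q => (Dn n v q.1 == i) && ~~ q.2) z))
       (iota 1 (n./2+1))) (vl n)) (vl n)) (masks (2 * n)).

Lemma zip_self (T1 T2 : Type) (f : T1 -> T2) s : zip s (map f s) = map (fun x => (x, f x)) s.
Proof. by elim: s => //= x s ->. Qed.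

Lemma lift_vl n p : p \in vl n -> exists u : PV n, pv u = p.
Proof. by case: p => x b; rewrite mem_vl /= => H; exists (Ordinal H, b). Qed.

Lemma chkn_ok n : chkn n -> [forall S : {set PV n}, [exists u : PV n, [exists v : PV n, (u != v) &&
     all (fun i => (#|[set w | (Df u w == i) && (w \in S)]| == #|[set w | (Df v w == i) && (w \in S)]|)
    && (#|[set w | (Df u w == i) && (w \notin S)]| == #|[set w | (Df v w == i) && (w \notin S)]|))
    (iota 1 (n./2+1))]]].
Proof.
move=> /allP C; apply/forallP => S.
pose mS := fun p : nat * bool => [exists w in S, pv w == p].
have mSE : forall w, mS (pv w) = (w \in S).
  move=> w; apply/existsP/idP => [[w' /andP [Hw /eqP /pv_inj <-]]|H] //.
  by exists w; rewrite H eqxx.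
have := C [seq mS p | p <- vl n] (masks_all _).
rewrite size_map size_allpairs size_iota mulnC => /(_ erefl) /=.
rewrite zip_self.
case/hasP => u' Hu' /hasP [v' Hv' /andP [ne /allP H]].
have [u Hu] := lift_vl Hu'; have [v Hv] := lift_vl Hv'.
apply/existsP; exists u; apply/existsP; exists v; apply/andP; split.
  by apply: contra ne => /eqP E; rewrite -Hu -Hv E.
apply/allP => i Hi; have /andP [/eqP E1 /eqP E2] := H i Hi.
rewrite !count_map in E1 E2.
have K : forall (x : PV n) (b : bool), #|[set w | (Df x w == i) && ((w \in S) == b)]| =
    count (fun p => (Dn n (pv x) p == i) && (mS p == b)) (vl n).
  move=> x b; rewrite -card_T; apply: eq_card => w; by rewrite !inE DfE mSE.
have K1 : forall x : PV n, #|[set w | (Df x w == i) && (w \in S)]| =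
    count (fun p => (Dn n (pv x) p == i) && mS p) (vl n).
  move=> x; rewrite (eq_count (a2 := fun p => (Dn n (pv x) p == i) && (mS p == true))).
    rewrite -K; apply: eq_card => w; by rewrite !inE ?eqb_id ?eqbF_neg.
  by move=> p; rewrite eqb_id.
have K2 : forall x : PV n, #|[set w | (Df x w == i) && (w \notin S)]| =
    count (fun p => (Dn n (pv x) p == i) && ~~ mS p) (vl n).
  move=> x; rewrite (eq_count (a2 := fun p => (Dn n (pv x) p == i) && (mS p == false))).
    rewrite -K; apply: eq_card => w; by rewrite !inE ?eqb_id ?eqbF_neg.
  by move=> p; rewrite eqbF_neg.
rewrite !K1 !K2 Hu Hv.
by rewrite E1 E2 !eqxx.
Qed.

End PartE.
Import PartE.

Module PartG.

Lemma uniq_map_inj_in (T1 T2 : eqType) (f : T1 -> T2) (s : seq T1) :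
  uniq (map f s) -> forall x y, x \in s -> y \in s -> f x = f y -> x = y.
Proof.
elim: s => //= a s IH /andP [Ha Hu] x y; rewrite !inE.
case/orP => [/eqP ->|Hx]; case/orP => [/eqP ->|Hy] //.
- by move=> E; move: Ha; rewrite E map_f.
- by move=> E; move: Ha; rewrite -E map_f.
- exact: IH.
Qed.

Definition histn n (ln : seq (nat * bool)) (p : nat * bool) :=
  [seq count (fun q => Dn n p q == i) ln | i <- iota 1 (n./2+1)].

Lemma count_pv n (l : seq (PV n)) v : count_mem v l = count_mem (pv v) (map (@pv n) l).
Proof.
rewrite count_map; apply: eq_count => w /=; apply/eqP/eqP => [->//|]; exact: pv_inj.
Qed.

Lemma UB_comp n (l : seq (PV n)) k : 0 < n ->
  uniq (map (histn n (map (@pv n) l)) (vl n)) ->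
  size (undup (map (fun p => count_mem p (map (@pv n) l)) (vl n))) = k ->
  exists f : PV n -> R, ID_assignment (prism_rel n) f /\ nvals f = k.
Proof.
move=> n0 Hu Hk; exists (fl l); split.
  apply: fl_inj => // u v E.
  have H : forall x : PV n, histn n (map (@pv n) l) (pv x) =
      [seq count (fun w => Df x w == i) l | i <- iota 1 (n./2+1)].
    by move=> x; apply: eq_map => i; rewrite count_map.
  apply: pv_inj; apply: (uniq_map_inj_in Hu); rewrite ?mem_vl ?ltn_ord //.
  by rewrite !H.
rewrite nvals_fl -Hk.
have -> : [seq count_mem v l | v <- enum (PV n)] =
   [seq count_mem p (map (@pv n) l) | p <- map (@pv n) (enum (PV n))].
  by rewrite -[X in _ = X]map_comp; apply: eq_map => v /=; rewrite count_pv.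
apply: perm_size; apply: perm_undup; apply: eq_mem_map; apply: perm_mem; exact: perm_vl.
Qed.

End PartG.
Import PartG.

Module PartK.

Definition P2 (a1 a2 b1 b2 : nat) := (a1 = b1 /\ a2 = b2) \/ (a1 = b2 /\ a2 = b1).
Definition P3 (a1 a2 a3 b1 b2 b3 : nat) :=
  (a1 = b1 /\ P2 a2 a3 b2 b3) \/ (a1 = b2 /\ P2 a2 a3 b1 b3) \/ (a1 = b3 /\ P2 a2 a3 b1 b2).
Definition P4 (a1 a2 a3 a4 b1 b2 b3 b4 : nat) :=
  (a1 = b1 /\ P3 a2 a3 a4 b2 b3 b4) \/ (a1 = b2 /\ P3 a2 a3 a4 b1 b3 b4) \/
  (a1 = b3 /\ P3 a2 a3 a4 b1 b2 b4) \/ (a1 = b4 /\ P3 a2 a3 a4 b1 b2 b3).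

Lemma perm_swap12 (a b : nat) s : perm_eq (a :: b :: s) (b :: a :: s).
Proof. by apply/permP => p /=; rewrite addnCA. Qed.

Lemma perm2 a1 a2 b1 b2 : perm_eq [:: a1; a2] [:: b1; b2] -> P2 a1 a2 b1 b2.
Proof.
move=> H; have : a1 \in [:: b1; b2] by rewrite -(perm_mem H) mem_head.
rewrite !inE.
case/orP => /eqP E; subst.
- left; split => //; move: H; rewrite perm_cons => Hp.
  by have [] := perm_small_eq (isT : size [:: b2] <= 1) Hp.
- right; split => //; move: H; rewrite (permPr (perm_swap12 _ _ _)) perm_cons => Hp.
  by have [] := perm_small_eq (isT : size [:: b1] <= 1) Hp.
Qed.

Lemma perm3 a1 a2 a3 b1 b2 b3 : perm_eq [:: a1; a2; a3] [:: b1; b2; b3] -> P3 a1 a2 a3 b1 b2 b3.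
Proof.
move=> H; have : a1 \in [:: b1; b2; b3] by rewrite -(perm_mem H) mem_head.
rewrite !inE.
case/or3P => /eqP E; subst.
- by left; split => //; apply: perm2; move: H; rewrite perm_cons.
- right; left; split => //; apply: perm2; move: H.
  by rewrite (permPr (perm_swap12 _ _ _)) perm_cons.
- right; right; split => //; apply: perm2; move: H.
  have P : perm_eq [:: b1; b2; b3] [:: b3; b1; b2].
    by apply/permP => p /=; lia.
  by rewrite (permPr P) perm_cons.
Qed.

Lemma perm4 a1 a2 a3 a4 b1 b2 b3 b4 :
  perm_eq [:: a1; a2; a3; a4] [:: b1; b2; b3; b4] -> P4 a1 a2 a3 a4 b1 b2 b3 b4.
Proof.
move=> H; have : a1 \in [:: b1; b2; b3; b4] by rewrite -(perm_mem H) mem_head.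
rewrite !inE.
case/or4P => /eqP E; subst.
- by left; split => //; apply: perm3; move: H; rewrite perm_cons.
- right; left; split => //; apply: perm3; move: H.
  by rewrite (permPr (perm_swap12 _ _ _)) perm_cons.
- right; right; left; split => //; apply: perm3; move: H.
  have P : perm_eq [:: b1; b2; b3; b4] [:: b3; b1; b2; b4].
    apply/permP => p /=; lia.
  by rewrite (permPr P) perm_cons.
- right; right; right; split => //; apply: perm3; move: H.
  have P : perm_eq [:: b1; b2; b3; b4] [:: b4; b1; b2; b3].
    apply/permP => p /=; lia.
  by rewrite (permPr P) perm_cons.
Qed.

Lemma cd_small n x a : 2 * (x - a + (a - x)) <= n -> cd n x a = x - a + (a - x).
Proof. rewrite /cd; lia. Qed.
Lemma cd_big n x a : n < 2 * (x - a + (a - x)) -> cd n x a = n - (x - a + (a - x)).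
Proof. rewrite /cd; lia. Qed.

Ltac cds := repeat (split; first lia);
  repeat match goal with |- context [cd ?n ?x ?a] =>
    first [rewrite (@cd_small n x a); last lia | rewrite (@cd_big n x a); last lia] end;
  lia.

Lemma regions n h r x : n = h + h + r -> r <= 1 -> 4 <= h -> x < n ->
  (x = 0 /\ cd n x 0 = 0 /\ cd n x 1 = 1 /\ cd n x (h-2) + 2 = h /\ cd n x h = h) \/
  (1 <= x /\ x + 2 <= h /\ cd n x 0 = x /\ cd n x 1 + 1 = x /\ cd n x (h-2) + x + 2 = h /\ cd n x h + x = h) \/
  (h <= x + 1 /\ x <= h /\ cd n x 0 = x /\ cd n x 1 + 1 = x /\ cd n x (h-2) + h = x + 2 /\ cd n x h + x = h) \/
  (x = h+1 /\ cd n x 0 + 1 = h + r /\ cd n x 1 = h /\ cd n x (h-2) = 3 /\ cd n x h = 1) \/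
  (h+2 <= x /\ x + 2 <= h + h /\ cd n x 0 + x = n /\ cd n x 1 + x = n + 1 /\ cd n x (h-2) + h = x + 2 /\ cd n x h + h = x) \/
  (h + h <= x + 1 /\ cd n x 0 + x = n /\ cd n x 1 + x = n + 1 /\ cd n x (h-2) + x + 2 = n + h /\ cd n x h + h = x).
Proof.
move=> En r1 h4 xn.
have [E|E] : x = 0 \/ 1 <= x by lia.
  by left; cds.
have [E2|E2] : x <= h-2 \/ h-2 < x by lia.
  by right; left; cds.
have [E3|E3] : x <= h \/ h < x by lia.
  by right; right; left; cds.
have [E4|E4] : x = h+1 \/ h+1 < x by lia.
  by right; right; right; left; cds.
have [E5|E5] : x <= 2*h-2 \/ 2*h-2 < x by lia.
  by right; right; right; right; left; cds.
by right; right; right; right; right; cds.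
Qed.

Lemma core n h r x y (s t : bool) : n = h + h + r -> r <= 1 -> 4 <= h -> 9 <= n -> x < n -> y < n ->
  perm_eq [:: cd n x 0 + s; cd n x 1 + s; cd n x (h-2) + s; cd n x h + s]
          [:: cd n y 0 + t; cd n y 1 + t; cd n y (h-2) + t; cd n y h + t] -> x = y /\ s = t.
Proof.
move=> En r1 h4 n9 xn yn /perm4 P.
have Rx := regions En r1 h4 xn; have Ry := regions En r1 h4 yn.
rewrite /P4 /P3 /P2 in P.
move: P Rx Ry; move: (cd n x 0) (cd n x 1) (cd n x (h-2)) (cd n x h) => a0 a1 a2 a3.
move: (cd n y 0) (cd n y 1) (cd n y (h-2)) (cd n y h) => b0 b1 b2 b3.
subst n => P Rx Ry.
case: s P; case: t => /= P; [split => //| exfalso | exfalso | split => //];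
destruct Rx as [Rx|[Rx|[Rx|[Rx|[Rx|Rx]]]]]; destruct Ry as [Ry|[Ry|[Ry|[Ry|[Ry|Ry]]]]];
  time lia.
Qed.

End PartK.
Import PartK.

Module PartL.

Lemma perm_pos (s1 s2 : seq nat) : size s1 = size s2 ->
  (forall i, 0 < i -> count_mem i s1 = count_mem i s2) -> perm_eq s1 s2.
Proof.
move=> Hs H.
have F : perm_eq (filter (fun x => 0 < x) s1) (filter (fun x => 0 < x) s2).
  apply/allP => i _ /=; rewrite !count_filter.
  case: i => [|i].
    by rewrite !(@eq_count _ _ pred0) ?count_pred0 // => x /=; case: x.
  by rewrite !(@eq_count _ _ (pred1 i.+1)) ?H // => x /=; case: eqP => // ->.
apply/allP => i _ /=; case: i => [|i]; last by rewrite H.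
have := perm_size F; rewrite !size_filter => Hc.
have := count_predC (pred1 0) s1; have := count_predC (pred1 0) s2.
have EC : forall s, count (predC (pred1 0)) s = count (fun x => 0 < x) s.
  by move=> s; apply: eq_count => x /=; rewrite lt0n.
rewrite !EC Hc => E2 E1; by rewrite -(eqn_add2r (count (fun x => 0 < x) s2)) E1 E2 Hs.
Qed.

Lemma UB9 n : 9 <= n -> exists f : PV n -> R, ID_assignment (prism_rel n) f /\ nvals f = 2.
Proof.
move=> n9.
set h := n./2.
have Hn : n = h + h + odd n by have := odd_double_half n; rewrite -addnn /h; lia.
have r1 : odd n <= 1 by case: (odd n).
have h4 : 4 <= h by lia.
have p0 : 0 < n by lia.
have p1 : 1 < n by lia.
have p2 : h - 2 < n by lia.
have p3 : h < n by lia.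
pose l : seq (PV n) := [:: (Ordinal p0, false); (Ordinal p1, false); (Ordinal p2, false); (Ordinal p3, false)].
have ul : uniq l.
  rewrite /l /= !inE !xpair_eqE -!val_eqE /= !andbT; lia.
exists (fl l); split.
  apply: fl_inj => // u v E.
  have Ei := proj2 (eq_in_map _ _ _) E.
  have Z : forall (x : PV n) i, h + 1 < i -> count (fun w => Df x w == i) l = 0.
    move=> x i hi; apply/eqP; rewrite -leqn0 leqNgt -has_count; apply/hasPn => w _.
    have := Df_le x w; rewrite -/h; lia.
  have HP : perm_eq (map (Df u) l) (map (Df v) l).
    apply: perm_pos; first by rewrite !size_map.
    move=> i i0; rewrite !count_map.
    have [hi|hi] := leqP i (h + 1).
      by apply: Ei; rewrite mem_iota; lia.
    by rewrite !Z.
  clear Ei Z E; case: u v HP => [x s] [y t] HP.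
  have sE : forall b : bool, (b != false) = b by case.
  move: HP; rewrite /l /= /Df /= !sE => /core => /(_ (odd n) Hn r1 h4 n9 (ltn_ord x) (ltn_ord y)).
  by case=> /val_inj -> ->.
rewrite nvals_fl.
have Hg : forall v : PV n, count_mem v l = (v \in l) by move=> v; rewrite count_uniq_mem.
apply: (@perm_size _ _ [:: 1; 0]); apply: uniq_perm => //; first exact: undup_uniq.
move=> x; rewrite mem_undup; apply/mapP/idP.
  by case=> v _ ->; rewrite Hg; case: (v \in l).
rewrite !inE => /orP [] /eqP ->.
  by exists (Ordinal p0, false); rewrite ?mem_enum // Hg /l inE eqxx.
exists (Ordinal p0, true); by rewrite ?mem_enum // Hg /l !inE !xpair_eqE /= !andbF.
Qed.

End PartL.
Import PartL.

Module PartM.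

Definition l3 : seq (PV 3) := [:: (Ordinal (isT : 0 < 3), false); (Ordinal (isT : 0 < 3), false); (Ordinal (isT : 1 < 3), false)].
Definition l4 : seq (PV 4) := [:: (Ordinal (isT : 0 < 4), false); (Ordinal (isT : 0 < 4), false); (Ordinal (isT : 0 < 4), true); (Ordinal (isT : 0 < 4), true); (Ordinal (isT : 1 < 4), false)].
Definition l5 : seq (PV 5) := [:: (Ordinal (isT : 0 < 5), false); (Ordinal (isT : 0 < 5), false); (Ordinal (isT : 2 < 5), false)].
Definition l6 : seq (PV 6) := [:: (Ordinal (isT : 0 < 6), false); (Ordinal (isT : 0 < 6), true); (Ordinal (isT : 1 < 6), false); (Ordinal (isT : 2 < 6), false); (Ordinal (isT : 3 < 6), true)].
Definition l7 : seq (PV 7) := [:: (Ordinal (isT : 0 < 7), false); (Ordinal (isT : 0 < 7), true); (Ordinal (isT : 1 < 7), false); (Ordinal (isT : 2 < 7), false); (Ordinal (isT : 3 < 7), true)].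
Definition l8 : seq (PV 8) := [:: (Ordinal (isT : 0 < 8), false); (Ordinal (isT : 1 < 8), false); (Ordinal (isT : 2 < 8), true); (Ordinal (isT : 6 < 8), true)].

Ltac go := vm_compute; reflexivity.

Lemma ub_small n (l : seq (PV n)) k : 0 < n ->
  uniq (map (histn n (map (@pv n) l)) (vl n)) /\
  size (undup (map (fun p => count_mem p (map (@pv n) l)) (vl n))) = k ->
  exists f : PV n -> R, ID_assignment (prism_rel n) f /\ nvals f = k.
Proof. by move=> n0 [H1 H2]; apply: (UB_comp n0 H1 H2). Qed.

Lemma c3 : chkn 3. Proof. go. Qed.
Lemma c4 : chkn 4. Proof. go. Qed.
Lemma c5 : chkn 5. Proof. go. Qed.


End PartM.
Import PartM.

Theorem mainTheorem6 (n : nat) : 3 <= n ->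
  (6 <= n -> IDI_is (prism_rel n) 2) /\
  (n <= 5 -> IDI_is (prism_rel n) 3).
Proof.
move=> n3; split => Hn.
- split; last by move=> f Hf; apply: LB2 => //; lia.
  have [E|[E|[E|E]]] : n = 6 \/ n = 7 \/ n = 8 \/ 9 <= n by lia.
  + subst n; apply: (@ub_small 6 l6) => //; split; go.
  + subst n; apply: (@ub_small 7 l7) => //; split; go.
  + subst n; apply: (@ub_small 8 l8) => //; split; go.
  + exact: UB9.
- have [E|[E|E]] : n = 3 \/ n = 4 \/ n = 5 by lia.
  + subst n; split; first by apply: (@ub_small 3 l3) => //; split; go.
    by move=> f Hf; apply: LB3 => //; apply: chkn_ok; exact: c3.
  + subst n; split; first by apply: (@ub_small 4 l4) => //; split; go.
    by move=> f Hf; apply: LB3 => //; apply: chkn_ok; exact: c4.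
  + subst n; split; first by apply: (@ub_small 5 l5) => //; split; go.
    by move=> f Hf; apply: LB3 => //; apply: chkn_ok; exact: c5.
Qed.
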